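(* Let $k\ge 1$ be an integer and let $G=K_{n_1,n_2,\dots,n_p}$ ($p\ge 2$) be a complete $p$-partite graph such that $|\{i : n_i\ge k\}|\ge 2$. Then $\Gamma_{\times k,t}(G)=2k$.
   Context: A set $S\subseteq V(G)$ is a $k$-tuple total dominating set ($k$TDS) of a graph $G$ with $\delta(G)\ge k$ if $|N_G(x)\cap S|\ge k$ for every $x\in V(G)$. The upper $k$-tuple total domination number $\Gamma_{\times k,t}(G)$ is the maximum cardinality of a minimal (with respect to inclusion) $k$TDS of $G$. $K_{n_1,\dots,n_p}$ denotes the complete $p$-partite graph with parts of sizes $n_1,\dots,n_p$. *)

(* Defs.v *)
From mathcomp Require Import all_boot.
Set Implicit Arguments. Unset Strict Implicit. Unset Printing Implicit Defensive.

(* A simple graph is a (symmetric, irreflexive) relation on a finite vertex type. *)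
Definition nbhd (T : finType) (G : rel T) (x : T) : {set T} := [set y | G x y].

Definition kTDS (T : finType) (G : rel T) (k : nat) (S : {set T}) : bool :=
  [forall x, k <= #|nbhd G x :&: S|].

Definition minimal_kTDS (T : finType) (G : rel T) (k : nat) (S : {set T}) : bool :=
  kTDS G k S && [forall S' : {set T}, (S' \proper S) ==> ~~ kTDS G k S'].

Definition upper_ktuple_tdom (T : finType) (G : rel T) (k : nat) : nat :=
  \max_(S : {set T} | minimal_kTDS G k S) #|S|.

Definition cmp_vertex (p : nat) (n : 'I_p -> nat) : finType :=
  {i : 'I_p & 'I_(n i)}.

Definition complete_multipartite (p : nat) (n : 'I_p -> nat) : rel (cmp_vertex n) :=
  fun u v => tag u != tag v.

(* Main.v *)
Require Import Defs.
From mathcomp Require Import all_boot.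
From mathcomp Require Import zify.
Set Implicit Arguments. Unset Strict Implicit.

Section S.
Variables (p : nat) (n : 'I_p -> nat).
Local Notation T := (cmp_vertex n).
Local Notation G := (@complete_multipartite p n).
Definition Pt (i : 'I_p) : {set T} := [set y : T | tag y == i].

Lemma nbhdE (x : T) (S : {set T}) : nbhd G x :&: S = S :\: Pt (tag x).
Proof.
apply/setP => y; rewrite !inE /complete_multipartite.
by rewrite eq_sym.
Qed.

Lemma cntE (x : T) (S : {set T}) :
  #|nbhd G x :&: S| + #|S :&: Pt (tag x)| = #|S|.
Proof. by rewrite nbhdE addnC cardsID. Qed.

Lemma nbhd_rem (x v : T) (S : {set T}) : tag v = tag x ->
  nbhd G x :&: (S :\ v) = nbhd G x :&: S.
Proof.
move=> e; apply/setP => y; rewrite !inE /complete_multipartite.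
case: (eqVneq y v) => [->|] //=; by rewrite e eqxx.
Qed.

Lemma min_step (k : nat) (S : {set T}) (v : T) :
  kTDS G k S -> v \in S -> ~~ kTDS G k (S :\ v) ->
  exists x : T, tag x != tag v /\ #|S| <= #|S :&: Pt (tag x)| + k.
Proof.
move=> /forallP HS vS /forallP Hn.
have [x Hx] : exists x, ~~ (k <= #|nbhd G x :&: (S :\ v)|).
  by apply/existsP; rewrite -negb_forall; apply/negP => /forallP H; apply: Hn.
exists x; split.
  apply/negP => /eqP e; move: Hx; rewrite nbhd_rem ?HS //.
have h1 := cntE x (S :\ v).
have h2 : #|(S :\ v) :&: Pt (tag x)| <= #|S :&: Pt (tag x)|.
  by apply: subset_leq_card; exact: (setSI _ (subD1set S v)).
have h3 := cardsD1 v S; rewrite vS in h3.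
lia.
Qed.

Lemma disj_le (S : {set T}) (i j : 'I_p) : i != j ->
  #|S :&: Pt i| + #|S :&: Pt j| <= #|S|.
Proof.
move=> ij; rewrite -(cardsID (Pt i) S) leq_add2l.
apply: subset_leq_card; apply/subsetP => y; rewrite !inE => /andP[yS /eqP ->].
by rewrite yS andbT eq_sym.
Qed.

Lemma upper (k : nat) (S : {set T}) : minimal_kTDS G k S -> #|S| <= 2 * k.
Proof.
case/andP => HS /forallP Hm.
rewrite leqNgt; apply/negP => big.
have [v0 v0S] : exists v, v \in S.
  apply/set0Pn; apply/negP => /eqP e; by rewrite e cards0 in big.
have Hrem : forall v, v \in S -> ~~ kTDS G k (S :\ v).
  by move=> v vS; move: (Hm (S :\ v)) => /implyP; apply; exact: properD1.
have [x [_ hx]] := min_step HS v0S (Hrem _ v0S).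
have [v1 v1S] : exists v, v \in S :&: Pt (tag x).
  apply/set0Pn; apply/negP => /eqP e; rewrite e cards0 in hx; lia.
have v1S' : v1 \in S by move: v1S; rewrite inE => /andP[].
have tv1 : tag v1 = tag x by move: v1S; rewrite !inE => /andP[_ /eqP].
have [y [ty hy]] := min_step HS v1S' (Hrem _ v1S').
rewrite tv1 in ty.
have := disj_le S ty; lia.
Qed.

Definition tg (a : 'I_p) (j : 'I_(n a)) : T := Tagged (fun i => 'I_(n i)) j.

Lemma tg_inj a : injective (@tg a).
Proof.
move=> x y e.
have h1 := @tagged_asE _ (fun i => 'I_(n i)) (tg x) y.
have h2 := @tagged_asE _ (fun i => 'I_(n i)) (tg x) x.
transitivity (tagged_as (tg x) (tg x)); first by rewrite h2.
rewrite [X in tagged_as _ X]e; exact: h1.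
Qed.

Definition blk (k : nat) (a : 'I_p) (H : k <= n a) : {set T} :=
  [set tg (widen_ord H j) | j : 'I_k].

Lemma blk_card k a (H : k <= n a) : #|blk H| = k.
Proof.
rewrite /blk card_imset ?card_ord //.
move=> x y /tg_inj e; apply: val_inj; exact: (congr1 val e).
Qed.

Lemma blk_tag k a (H : k <= n a) u : u \in blk H -> tag u = a.
Proof. by case/imsetP => j _ ->. Qed.

Lemma fail_side k a b (Ha : k <= n a) (Hb : k <= n b) (S' : {set T}) v :
  a != b -> 1 <= k -> S' \subset (blk Ha :|: blk Hb) :\ v -> v \in blk Ha ->
  ~~ kTDS G k S'.
Proof.
move=> ab k1 sub va.
have [x xb] : exists x, x \in blk Hb.
  apply/set0Pn; apply/negP => /eqP e; move: (blk_card Hb); rewrite e cards0; lia.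
apply/forallP => /(_ x).
have tx := blk_tag xb.
have : nbhd G x :&: S' \subset blk Ha :\ v.
  apply/subsetP => y; rewrite nbhdE inE => /andP[yP /(subsetP sub)].
  rewrite !inE => /andP[-> /orP[] //].
  move=> /blk_tag ty; move: yP; by rewrite inE ty tx eqxx.
move/subset_leq_card; have := cardsD1 v (blk Ha); rewrite va blk_card; lia.
Qed.

Lemma lower k a b (Ha : k <= n a) (Hb : k <= n b) : a != b -> 1 <= k ->
  minimal_kTDS G k (blk Ha :|: blk Hb) /\ #|blk Ha :|: blk Hb| = 2 * k.
Proof.
move=> ab k1.
have dis : blk Ha :&: blk Hb = set0.
  apply/setP => y; rewrite !inE; apply/negP => /andP[/blk_tag e1 /blk_tag e2].
  by move: ab; rewrite -e1 -e2 eqxx.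
split; last by rewrite cardsU dis cards0 !blk_card; lia.
apply/andP; split.
  apply/forallP => x; rewrite nbhdE.
  case: (eqVneq (tag x) a) => e.
    apply: (leq_trans _ (subset_leq_card (_ : blk Hb \subset _))).
      by rewrite blk_card.
    apply/subsetP => y yb; rewrite !inE yb orbT (blk_tag yb) e eq_sym ab.
    by [].
  apply: (leq_trans _ (subset_leq_card (_ : blk Ha \subset _))).
    by rewrite blk_card.
  apply/subsetP => y ya; rewrite !inE ya (blk_tag ya) eq_sym e.
  by [].
apply/forallP => S'; apply/implyP => /properP [sub [v vS vS']].
have sub' : S' \subset (blk Ha :|: blk Hb) :\ v.
  apply/subsetP => y yS; rewrite in_setD1 (subsetP sub _ yS) andbT.
  by apply/negP => /eqP e; move: vS'; rewrite -e yS.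
move: vS; rewrite inE => /orP[va|vb].
  exact: fail_side ab k1 sub' va.
rewrite setUC in sub'.
by apply: fail_side _ k1 sub' vb; rewrite eq_sym.
Qed.

End S.

Theorem mainTheorem4 (k p : nat) (n : 'I_p -> nat) :
  1 <= k -> 2 <= p ->
  2 <= #|[set i : 'I_p | k <= n i]| ->
  upper_ktuple_tdom (@complete_multipartite p n) k = 2 * k.
Proof.
move=> k1 _ /card_gt1P [a [b [ain bin ab]]].
move: ain bin; rewrite !inE => Ha Hb.
have [m c] := lower Ha Hb ab k1.
apply/eqP; rewrite eqn_leq; apply/andP; split.
  by apply/bigmax_leqP => S; apply: upper.
by rewrite -c; apply: (leq_bigmax_cond _ m).
Qed.
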